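(* Let $\mathbb F_0$ be a field and $\mathbb F=\mathbb F_0(\omega)$ a degree-$2$ extension field of $\mathbb F_0$. Let $h,d,n$ be nonnegative integers with $h\le d$, and let $A,B\in \mathbb F_0^{d\times n}$ be matrices with $\mathrm{rank}(A+\omega B)=d$. If $\mathrm{rank}\binom{A}{B}=2d-h$, then there is a matrix $Q\in \mathbb F^{h\times d}$ of rank $h$ such that $Q(A+\omega B)$ has all its entries in $\mathbb F_0$.
   Context: $\binom{A}{B}$ denotes the $2d\times n$ matrix obtained by stacking $A$ above $B$. *)

(* Defs.v *)
From HB Require Import structures.
From mathcomp Require Import all_boot all_order all_algebra all_field.
Set Implicit Arguments. Unset Strict Implicit. Unset Printing Implicit Defensive.
Import GRing.Theory.
Local Open Scope ring_scope.

Definition liftmx (F0 : fieldType) (L : fieldExtType F0) (m n : nat)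
  (A : 'M[F0]_(m, n)) : 'M[L]_(m, n) := map_mx (in_alg L) A.

(* Main.v *)
Require Import Defs.
From HB Require Import structures.
From mathcomp Require Import all_boot all_order all_algebra all_field.
From mathcomp Require Import zify.
Import GRing.Theory.
Local Open Scope ring_scope.
Section S.
Variables (F0 : fieldType) (L : fieldExtType F0) (w : L)
  (hdeg : \dim {:L} = 2%N)
  (hgen : <<1%AS; w>>%VS = fullv).
Lemma adeg : adjoin_degree 1%AS w = 2%N.
Proof. by have := dim_Fadjoin 1%AS w; rewrite hgen hdeg dimv1 muln1. Qed.
Lemma F1 : exists a b : F0, w * w = in_alg L a + w * in_alg L b.
Proof.
have := @Fadjoin_poly_eq _ _ 1%AS w (w * w) (ltac:(by rewrite hgen memvf)).
set p := Fadjoin_poly _ _ _.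
have sz := size_Fadjoin_poly 1%AS w (w * w); rewrite adeg in sz.
have /polyOverP pO := Fadjoin_polyOver 1%AS w (w * w).
rewrite (horner_coef_wide _ sz) !big_ord_recr big_ord0 /= add0r expr0 expr1 mulr1 => <-.
have [a ea] := vlineP _ _ (pO 0%N).
have [b eb] := vlineP _ _ (pO 1%N).
by exists a, b; rewrite -/p ea eb mulrC.
Qed.
Lemma F2 c1 c2 : in_alg L c1 + w * in_alg L c2 = 0 -> c1 = 0 /\ c2 = 0.
Proof.
move=> e.
have [c20|c2n0] := eqVneq c2 0.
  move: e; rewrite c20 rmorph0 mulr0 addr0 => /eqP; rewrite scaler_eq0 oner_eq0 orbF => /eqP.
  by move=> ->.
exfalso.
have wE : w = in_alg L (- c1 / c2).
  rewrite fmorph_div rmorphN /=; apply: (canRL (mulfK _)); first by rewrite scaler_eq0 oner_eq0 orbF.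
  by apply/eqP; rewrite -addr_eq0 addrC; apply/eqP.
have : w \in (1%AS : {vspace L}) by rewrite wE memvZ ?mem1v.
move/Fadjoin_idP; rewrite hgen => e1.
by have := dimv1 L; rewrite -e1 hdeg.
Qed.
End S.
Lemma ACh (V : zmodType) (x1 x2 x3 x4 x5 : V) :
  x1 + x2 + (x3 + (x4 + x5)) = x1 + x4 + (x2 + (x3 + x5)).
Proof.
by rewrite -!addrA; congr (_ + _); rewrite [RHS]addrCA [x4 + (x3 + _)]addrCA.
Qed.

Theorem lemma3p3 (F0 : fieldType) (L : fieldExtType F0) (w : L)
  (hdeg : \dim {:L} = 2%N)
  (hgen : <<1%AS; w>>%VS = fullv)
  (h d n : nat) (hle : (h <= d)%N)
  (A B : 'M[F0]_(d, n))
  (hrk : \rank (liftmx L A + w *: liftmx L B)%R = d)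
  (hrkAB : \rank (col_mx A B) = (2 * d - h)%N) :
  exists Q : 'M[L]_(h, d),
    \rank Q = h /\
    exists C : 'M[F0]_(h, n), Q *m (liftmx L A + w *: liftmx L B) = liftmx L C.
Proof.
have [a [b hw]] := @F1 F0 L w hdeg hgen.
pose S := col_mx B (A + b *: B).
have rS : \rank S = (2*d - h)%N.
  rewrite -hrkAB; apply/eqmx_rank.
  rewrite /S -!addsmxE; apply/andP; split.
    rewrite addsmx_sub addsmxSr /=.
    by apply: addmx_sub; [exact: addsmxSl | apply: scalemx_sub; exact: addsmxSr].
  rewrite addsmx_sub addsmxSl andbT.
  have eA : A = (A + b *: B) + (-b) *: B by rewrite scaleNr addrK.
  rewrite [X in (X <= _)%MS]eA.
  by apply: addmx_sub; [exact: addsmxSr | apply: scalemx_sub; exact: addsmxSl].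
have rK : \rank (kermx S) = h.
  rewrite mxrank_ker rS; lia.
have [Y [fY kY]] : exists Y : 'M[F0]_(h, d + d), row_free Y /\ Y *m S = 0.
  have gen : forall r (Z : 'M[F0]_(r, d+d)), r = h -> row_free Z -> Z *m S = 0 ->
      exists Y : 'M[F0]_(h, d + d), row_free Y /\ Y *m S = 0.
    by move=> r Z hr; subst r; exists Z.
  apply: (gen _ (row_base (kermx S))) => //; first exact: row_base_free.
  by apply/sub_kermxP; rewrite eq_row_base submx_refl.
set Y1 := lsubmx Y; set Y2 := rsubmx Y.
have kY' : Y1 *m B + Y2 *m (A + b *: B) = 0 by rewrite -mul_row_col /Y1 /Y2 hsubmxK.
pose C := Y1 *m A + a *: (Y2 *m B).
pose Q := liftmx L Y1 + w *: liftmx L Y2.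
have QM : Q *m (liftmx L A + w *: liftmx L B) = liftmx L C.
  have : liftmx L (Y1 *m B + Y2 *m (A + b *: B)) = 0 by rewrite kY' /liftmx map_mx0.
  rewrite /Q /C /liftmx !map_mxD !map_mxM !map_mxZ !map_mxM => e0.
  rewrite map_mxD map_mxZ mulmxDr -scalemxAr in e0.
  rewrite !mulmxDl !mulmxDr -!scalemxAl -!scalemxAr !scalerA hw scalerDl -scalerA.
  rewrite -[RHS]addr0 -(scaler0 _ w) -e0 !scalerDr.
  by rewrite ACh.
have fC : row_free C.
  apply: inj_row_free => z zC.
  have zQ : (liftmx L z *m Q) *m (liftmx L A + w *: liftmx L B) = 0.
    by rewrite -mulmxA QM /liftmx -map_mxM zC map_mx0.
  have fM : row_free (liftmx L A + w *: liftmx L B) by rewrite /row_free hrk.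
  move/eqP: zQ; rewrite mulmx_free_eq0 // /Q mulmxDr -scalemxAr /liftmx -!map_mxM => /eqP e.
  have h12 : forall i j, (z *m Y1) i j = 0 /\ (z *m Y2) i j = 0.
    move=> i j; apply: (@F2 F0 L w hdeg hgen).
    by have := congr1 (fun M : 'M[L]_(1, d) => M i j) e; rewrite !mxE.
  apply: (row_free_inj fY); rewrite mul0mx -[Y]hsubmxK mul_mx_row.
  have -> : z *m Y1 = 0 by apply/matrixP => i j; rewrite (h12 i j).1 mxE.
  have -> : z *m Y2 = 0 by apply/matrixP => i j; rewrite (h12 i j).2 mxE.
  by rewrite row_mx0.
exists Q; split; last by exists C.
apply/eqP; rewrite eqn_leq rank_leq_row /=.
have : (\rank C <= \rank Q)%N.
  rewrite -(mxrank_map (in_alg L) C) -/(liftmx L C) -QM; exact: mxrankM_maxl.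
by rewrite (eqP fC).
Qed.
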